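(* Let $\Gamma$ be a pre-automatic structure with generators $A$ and language of representatives $L$. (1) If $\iota : A\to L$ is an assignment of generators for $\Gamma$, and $\sigma : A^*\to S$ and $\tau : A^*\to T$ are interpretations of $\Gamma$ both consistent with $\iota$, then there is an isomorphism $\theta : S\to T$ with $\tau=\theta\circ\sigma$. (2) If $\iota$ and $\iota'$ are equivalent assignments of generators, then every interpretation consistent with $\iota$ is consistent with $\iota'$. (3) Conversely, every interpretation $\sigma$ of $\Gamma$ is consistent with some assignment of generators, and any two assignments of generators with which $\sigma$ is consistent are equivalent.
   Context: Let $A$ be a finite alphabet, $\$ \notin A$ a new symbol, $A^\$ = A\cup\{\$\}$, and let $\delta : A^*\times A^*\to(A^\$\times A^\$)^*$ send a pair of words to the word of pairs obtained by padding the shorter word on the right with $\$$ and reading both letter by letter. A synchronous automaton is a finite automaton over $A^\$\times A^\$$; it recognises $R\subseteq A^*\times A^*$ if it accepts exactly $\delta(R)$. A pre-automatic structure $\Gamma$ consists of a finite alphabet $A$, a finite automaton recognising a language $L\subseteq A^*$, a synchronous automaton recognising $L_=\subseteq L\times L$, and for each $a\in A$ a synchronous automaton recognising $L_a\subseteq L\times L$. An interpretation of $\Gamma$ with respect to a semigroup $S$ is a morphism $\sigma:A^*\to S$ with $\sigma(L)=S$, such that for $u,v\in L$: $(u,v)\in L_=$ iff $\sigma(u)=\sigma(v)$, and for each $a\in A$, $(u,v)\in L_a$ iff $\sigma(ua)=\sigma(v)$. An assignment of generators for $\Gamma$ is a function $\iota:A\to L$ such that there exists an interpretation $\sigma$ of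 $\Gamma$ (with respect to some semigroup) with $\sigma(a)=\sigma(\iota(a))$ for all $a\in A$; such an interpretation is said to be consistent with $\iota$. Two assignments of generators $\iota,\iota'$ are equivalent if $(\iota(a),\iota'(a))\in L_=$ for every $a\in A$. *)

(* Defs.v *)
From mathcomp Require Import all_boot.
Set Implicit Arguments. Unset Strict Implicit. Unset Printing Implicit Defensive.

Record semigroup := Semigroup {
  sg_car :> Type;
  sg_op : sg_car -> sg_car -> sg_car;
  sg_assoc : associative sg_op }.

Definition word_morphism (A : Type) (S : semigroup) (sigma : seq A -> S) :=
  forall u v, sigma (u ++ v) = sg_op (sigma u) (sigma v).

Definition sg_iso (S T : semigroup) (theta : S -> T) :=
  bijective theta /\ forall x y, theta (sg_op x y) = sg_op (theta x) (theta y).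

Record dfa (Sigma : finType) := Dfa {
  dfa_state : finType;
  dfa_start : dfa_state;
  dfa_accept : {set dfa_state};
  dfa_trans : dfa_state -> Sigma -> dfa_state }.

Definition accepts (Sigma : finType) (M : dfa Sigma) (w : seq Sigma) : bool :=
  foldl (@dfa_trans _ M) (dfa_start M) w \in dfa_accept M.

(* A^$ = option A, with None playing the role of the padding symbol $. *)
Definition padded (A : finType) : finType := (option A * option A)%type.

(* delta : A^* x A^* -> (A^$ x A^$)^*, padding the shorter word with $. *)
Definition delta (A : finType) (u v : seq A) : seq (padded A) :=
  mkseq (fun i => (nth None (map Some u) i, nth None (map Some v) i))
        (maxn (size u) (size v)).

(* Since delta is injective, the recognised relation is
   {(u,v) | delta(u,v) accepted}. *)
Record preauto (A : finType) := PreAuto {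
  pa_L : dfa A;
  pa_eq : dfa (padded A);
  pa_gen : A -> dfa (padded A);
  pa_eq_sub : forall w, accepts pa_eq w ->
     exists u v, [/\ accepts pa_L u, accepts pa_L v & w = delta u v];
  pa_gen_sub : forall a w, accepts (pa_gen a) w ->
     exists u v, [/\ accepts pa_L u, accepts pa_L v & w = delta u v] }.

Section PreAuto.
Variables (A : finType) (G : preauto A).

Definition inL (u : seq A) : bool := accepts (pa_L G) u.
Definition Leq (u v : seq A) : bool := accepts (pa_eq G) (delta u v).
Definition Lgen (a : A) (u v : seq A) : bool := accepts (pa_gen G a) (delta u v).

Definition interpretation (S : semigroup) (sigma : seq A -> S) : Prop :=
  [/\ word_morphism sigma,
      (forall s : S, exists2 u, inL u & sigma u = s),
      (forall u v, inL u -> inL v -> (Leq u v <-> sigma u = sigma v)) &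
      (forall a u v, inL u -> inL v ->
         (Lgen a u v <-> sigma (rcons u a) = sigma v))].

Definition consistent (S : semigroup) (sigma : seq A -> S) (iota : A -> seq A) :=
  forall a, sigma [:: a] = sigma (iota a).

Definition assignment (iota : A -> seq A) : Prop :=
  (forall a, inL (iota a)) /\
  exists (S : semigroup) (sigma : seq A -> S),
    interpretation sigma /\ consistent sigma iota.

Definition equiv_assign (iota iota' : A -> seq A) : Prop :=
  forall a, Leq (iota a) (iota' a).

End PreAuto.

(* Main.v *)
Require Import Defs.
From mathcomp Require Import all_boot.
From Stdlib Require Import ClassicalEpsilon.

Section Aux.
Variables (A : finType) (G : preauto A).

Lemma interp_Q (iota : A -> seq A) (S T : semigroup)
  (sigma : seq A -> S) (tau : seq A -> T) :
  (forall a, inL G (iota a)) ->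
  interpretation G sigma -> consistent sigma iota ->
  interpretation G tau -> consistent tau iota ->
  forall w1 w2, sigma w1 = sigma w2 -> tau w1 = tau w2.
Proof.
move=> Hi [sM sS sE sG] cs [tM tS tE tG] ct.
have P : forall w, w != [::] -> exists u, [/\ inL G u, sigma w = sigma u & tau w = tau u].
  elim/last_ind => [//|w' a IH] _.
  case: (eqVneq w' [::]) => [->|nw'].
    by exists (iota a); split => //; [apply: cs | apply: ct].
  have [u' [Lu' e1 e2]] := IH nw'.
  have [v Lv ev] := sS (sigma (rcons u' a)).
  have Hg : Lgen G a u' v by apply/(sG a u' v Lu' Lv).
  have et := proj1 (tG a u' v Lu' Lv) Hg.
  exists v; split => //.
    by rewrite ev -!cats1 !sM e1.
  by rewrite -et -!cats1 !tM e2.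
have Q : forall w1 w2, w1 != [::] -> w2 != [::] -> sigma w1 = sigma w2 -> tau w1 = tau w2.
  move=> w1 w2 n1 n2 e.
  have [u1 [L1 s1 t1]] := P _ n1; have [u2 [L2 s2 t2]] := P _ n2.
  rewrite t1 t2; apply/(tE _ _ L1 L2)/(sE _ _ L1 L2); by rewrite -s1 -s2 e.
have E : forall w2, w2 != [::] -> sigma [::] = sigma w2 -> tau [::] = tau w2.
  move=> w2 n2 e.
  have [u2 [L2 s2 t2]] := P _ n2.
  have [x0 Lx0 ex0] := tS (tau [::]).
  case: (eqVneq x0 [::]) => [x0E|nx0].
    subst x0; rewrite t2; apply/(tE _ _ Lx0 L2)/(sE _ _ Lx0 L2); by rewrite -s2 e.
  have h : tau (x0 ++ w2) = tau x0.
    apply: Q.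
    - by case: x0 nx0 {Lx0 ex0}.
    - done.
    by rewrite sM -e -sM cats0.
  transitivity (sg_op (tau x0) (tau w2)); first by rewrite -tM h ex0.
  by rewrite ex0 -tM.
move=> w1 w2.
case: (eqVneq w1 [::]) => [->|n1]; case: (eqVneq w2 [::]) => [->|n2] e.
- by [].
- exact: E.
- by apply/esym/E.
- exact: Q.
Qed.

Lemma pick_rep (S : semigroup) (sigma : seq A -> S) :
  (forall s : S, exists2 u, inL G u & sigma u = s) ->
  { f : S -> seq A | forall s, inL G (f s) /\ sigma (f s) = s }.
Proof.
move=> H.
have H' : forall s, exists u, inL G u /\ sigma u = s.
  by move=> s; have [u ? ?] := H s; exists u.
exists (fun s => proj1_sig (constructive_indefinite_description _ (H' s))).
by move=> s; case: constructive_indefinite_description.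
Qed.

End Aux.

Theorem proposition2p4 (A : finType) (G : preauto A) :
  (* (1) *)
  (forall (iota : A -> seq A) (S T : semigroup)
          (sigma : seq A -> S) (tau : seq A -> T),
      assignment G iota ->
      interpretation G sigma -> consistent sigma iota ->
      interpretation G tau -> consistent tau iota ->
      exists theta : S -> T, sg_iso theta /\ forall w, tau w = theta (sigma w))
  /\
  (* (2) *)
  (forall iota iota' : A -> seq A,
      assignment G iota -> assignment G iota' -> equiv_assign G iota iota' ->
      forall (S : semigroup) (sigma : seq A -> S),
        interpretation G sigma -> consistent sigma iota -> consistent sigma iota')
  /\
  (* (3) *)
  (forall (S : semigroup) (sigma : seq A -> S),
      interpretation G sigma ->
      (exists iota, assignment G iota /\ consistent sigma iota) /\
      (forall iota iota', assignment G iota -> assignment G iota' ->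
         consistent sigma iota -> consistent sigma iota' ->
         equiv_assign G iota iota')).
Proof.
split.
  move=> iota S T sigma tau [Li _] Is cs It ct.
  have Qst := @interp_Q _ _ _ _ _ _ _ Li Is cs It ct.
  have Qts := @interp_Q _ _ _ _ _ _ _ Li It ct Is cs.
  have Is' := Is; have It' := It.
  case: Is' => sM sS _ _; case: It' => tM tS _ _.
  have [f Hf] := @pick_rep _ _ _ _ sS.
  have [g Hg] := @pick_rep _ _ _ _ tS.
  have key : forall w, tau w = tau (f (sigma w)).
    by move=> w; apply: Qst; rewrite (proj2 (Hf _)).
  exists (fun s => tau (f s)); split => //.
  split; first last.
    move=> x y; have [_ ex] := Hf x; have [_ ey] := Hf y.
    by rewrite -{1}ex -{1}ey -sM -key tM.
  exists (fun t => sigma (g t)).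
    move=> s; rewrite -[RHS](proj2 (Hf s)); apply: Qts.
    by rewrite (proj2 (Hg _)).
  move=> t; rewrite -(key (g t)); exact: (proj2 (Hg t)).
split.
  move=> iota iota' [Li _] [Li' _] Heq S sigma Is cs a.
  case: Is => _ _ sE _.
  by rewrite cs; apply/(sE _ _ (Li a) (Li' a)).
move=> S sigma Is; split.
  have Is' := Is; case: Is' => _ sS _ _.
  have [f Hf] := @pick_rep _ _ _ _ sS.
  exists (fun a => f (sigma [:: a])).
  have cs : consistent sigma (fun a => f (sigma [:: a])).
    by move=> a; rewrite (proj2 (Hf _)).
  split => //; split; first by move=> a; exact: (proj1 (Hf _)).
  by exists S, sigma.
move=> iota iota' [Li _] [Li' _] cs cs' a.
case: Is => _ _ sE _.
by apply/(sE _ _ (Li a) (Li' a)); rewrite -cs -cs'.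
Qed.
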